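(* Let $A=(a_0,\dots,a_{n-1})$ be an array of pairwise distinct numbers, $k_1<k_2$ positive integers, $\Delta=k_2-k_1$. Consider one iteration of Cover-approx$(A,k_1,k_2)$, in which the prefix $(a,c)$ (from the current start $a$ to the found end $c$) and then the suffix $(b,c)$ are found. Let $X=(x_1,\dots,x_{k_2})$ be the lexicographically minimal (with respect to the sequence of positions) increasing subsequence of length $k_2$ of $(a_a,\dots,a_c)$, and $Y=(y_1,\dots,y_{k_1})$ the lexicographically minimal increasing subsequence of length $k_1$ of $(a_b,\dots,a_c)$, where $x_t,y_t$ denote positions. Then $y_i\ge x_{i+\Delta}$ for all $1\le i\le k_1$.
   Context: For $i\le j$, $\mathrm{LIS}(i,j)$ denotes the length of a longest increasing subsequence of $(a_i,\dots,a_j)$. Cover-approx$(A,k_1,k_2)$: set $C=\emptyset$, $i=0$. Repeat: let $j$ be the smallest index $\ge i$ with $\mathrm{LIS}(i,j)\ge k_2$; if none exists, return $C$. Let $q$ be the largest index $\le j$ with $\mathrm{LIS}(q,j)\ge k_1$. Add the segment $(q,j,L)$ to $C$, where $L$ is a longest increasing subsequence of $(a_q,\dots,a_j)$, and set $i=q$. In an iteration, $(i,j)$ is called the computed prefix and $(q,j)$ the computed suffix. *)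

(* Defs.v *)
From mathcomp Require Import all_boot all_order all_algebra.
Set Implicit Arguments. Unset Strict Implicit. Unset Printing Implicit Defensive.
Import Order.TTheory GRing.Theory Num.Theory.

Section CoverApprox.
Variable R : realDomainType.
Local Open Scope ring_scope.

(* The array A = (a_0, ..., a_{n-1}) is a sequence; a_t = nth 0 A t. *)

Definition inc_sub (A : seq R) (i j : nat) (p : seq nat) : Prop :=
  [/\ (j < size A)%N, sorted ltn p, all (fun t => (i <= t <= j)%N) p
    & sorted (fun u v => nth 0 A u < nth 0 A v) p].

Definition LIS_ge (A : seq R) (i j k : nat) : Prop :=
  exists p, inc_sub A i j p /\ size p = k.

Definition prefix_end (A : seq R) (k2 i c : nat) : Prop :=
  [/\ (i <= c)%N, LIS_ge A i c k2
    & forall j, (i <= j < c)%N -> ~ LIS_ge A i j k2].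

Definition suffix_start (A : seq R) (k1 c q : nat) : Prop :=
  [/\ (q <= c)%N, LIS_ge A q c k1
    & forall q', (q < q' <= c)%N -> ~ LIS_ge A q' c k1].

(* the values taken by the loop variable i during Cover-approx(A, k1, k2) *)
Inductive cover_start (A : seq R) (k1 k2 : nat) : nat -> Prop :=
| cover_start0 : cover_start A k1 k2 0
| cover_startS i c q : cover_start A k1 k2 i -> prefix_end A k2 i c ->
    suffix_start A k1 c q -> cover_start A k1 k2 q.

Definition lex_le (p p' : seq nat) : Prop :=
  p = p' \/ exists t, [/\ (t < size p)%N, (t < size p')%N,
                          take t p = take t p' & (nth 0 p t < nth 0 p' t)%N].

Definition lexmin_inc_sub (A : seq R) (i j k : nat) (p : seq nat) : Prop :=
  [/\ inc_sub A i j p, size p = k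
    & forall p', inc_sub A i j p' -> size p' = k -> lex_le p p'].

End CoverApprox.

(* Main.v *)
Require Import Defs.
From mathcomp Require Import all_boot all_order all_algebra.
From mathcomp Require Import zify.
Import Order.TTheory GRing.Theory Num.Theory.
Set Implicit Arguments. Unset Strict Implicit.

Section Aux.
Variable R : realDomainType.
Implicit Types (A : seq R) (p q : seq nat).

Lemma sorted_join (T : Type) (e : rel T) (p q : seq T) x y :
  sorted e (rcons p x) -> sorted e (y :: q) -> e x y -> sorted e (p ++ x :: y :: q).
Proof. by move=> H1 H2 H3; rewrite sorted_cat_cons H1 /= H3. Qed.

Lemma inc_take A i j p n : inc_sub A i j p -> inc_sub A i j (take n p).
Proof.
case=> h1 h2 h3 h4; split=> //; [exact: take_sorted h2| |exact: take_sorted h4].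
by apply/allP=> x /mem_take /(allP h3).
Qed.

Lemma inc_weak A i i' j p : (i' <= i)%N -> inc_sub A i j p -> inc_sub A i' j p.
Proof.
move=> le [h1 h2 h3 h4]; split=> //.
apply/allP=> x /(allP h3) /andP[hx hx']; rewrite hx' andbT.
exact: leq_trans hx.
Qed.

Lemma inc_drop A i j p n : inc_sub A i j p -> (n < size p)%N ->
  inc_sub A (nth 0%N p n) j (drop n p).
Proof.
case=> h1 h2 h3 h4 hn; split=> //; [exact: drop_sorted h2| |exact: drop_sorted h4].
apply/allP=> x /(nthP 0%N) [m]; rewrite size_drop => hm <-.
rewrite nth_drop.
have hnm : (n + m < size p)%N by rewrite -ltn_subRL.
have /andP[_ ->] := allP h3 _ (mem_nth 0%N hnm).
rewrite andbT.
apply: (sorted_leq_nth leq_trans leqnn 0%N (sub_sorted (fun u v => @ltnW u v) h2)) => //=.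
  all: rewrite ?inE; lia.
Qed.

Lemma inc_cat A i j p q x y : inc_sub A i j (rcons p x) -> inc_sub A i j (y :: q) ->
  (x < y)%N -> (nth 0 A x < nth 0 A y)%R -> inc_sub A i j (p ++ x :: y :: q).
Proof.
case=> h1 h2 h3 h4 [_ g2 g3 g4] l1 l2; split=> //.
- exact: sorted_join.
- by rewrite -cat_rcons all_cat h3 g3.
- exact: (@sorted_join _ (fun u v => (nth 0 A u < nth 0 A v)%R)).
Qed.

Lemma inc_nth_lt A i j p n : inc_sub A i j p -> (n < size p)%N ->
  (i <= nth 0%N p n <= j)%N.
Proof. by case=> _ _ h3 _ hn; apply: (allP h3); apply: mem_nth. Qed.

Lemma inc_pos_lt A i j p m n : inc_sub A i j p -> (m < n)%N -> (n < size p)%N ->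
  (nth 0%N p m < nth 0%N p n)%N.
Proof.
case=> _ h2 _ _ hmn hn; apply: (sorted_ltn_nth ltn_trans 0%N h2) => //=.
exact: ltn_trans hn.
Qed.

Lemma inc_val_lt A i j p m n : inc_sub A i j p -> (m < n)%N -> (n < size p)%N ->
  (nth 0 A (nth 0%N p m) < nth 0 A (nth 0%N p n))%R.
Proof.
case=> _ _ _ h4 hmn hn.
apply: (sorted_ltn_nth (leT := fun u v => (nth 0 A u < nth 0 A v)%R) _ 0%N h4) => //=.
  by move=> u v w /= huv hvw; apply: lt_trans huv hvw.
exact: ltn_trans hn.
Qed.

End Aux.

Lemma lex_contra (X Z : seq nat) s : lex_le X Z -> (s < size X)%N -> (s < size Z)%N ->
  take s X = take s Z -> (nth 0%N Z s < nth 0%N X s)%N -> False.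
Proof.
move=> hl hX hZ ht hlt; case: hl => [E|[u [h1 h2 h3 h4]]]; first by rewrite E ltnn in hlt.
case: (ltngtP u s) => hus.
- have : nth 0%N (take s X) u = nth 0%N (take s Z) u by rewrite ht.
  by rewrite !nth_take // => E; rewrite E ltnn in h4.
- have : nth 0%N (take u X) s = nth 0%N (take u Z) s by rewrite h3.
  by rewrite !nth_take // => E; rewrite E ltnn in hlt.
- by subst u; have := ltn_trans hlt h4; rewrite ltnn.
Qed.

Theorem lemma3 (R : realDomainType) (A : seq R) (k1 k2 : nat)
  (a b c : nat) (X Y : seq nat) :
  uniq A -> (0 < k1)%N -> (k1 < k2)%N ->
  cover_start A k1 k2 a ->
  prefix_end A k2 a c ->
  suffix_start A k1 c b ->
  lexmin_inc_sub A a c k2 X ->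
  lexmin_inc_sub A b c k1 Y ->
  forall t, (t < k1)%N -> (nth 0 X (t + (k2 - k1)) <= nth 0 Y t)%N.
Proof.
move=> uA k1p k12 _ _ [hbc _ Hmax] [HX sX minX] [HY sY _].
have cA : (c < size A)%N by case: HX.
elim=> [|t IH] ht.
- rewrite add0n leqNgt; apply/negP => hlt.
  have hd : (k2 - k1 < size X)%N by rewrite sX; lia.
  have /andP[hb0 _] := inc_nth_lt (n := 0) HY (ltac:(lia)).
  have /andP[_ hxc] := inc_nth_lt HX hd.
  apply: (Hmax (nth 0%N X (k2 - k1))).
    by rewrite hxc andbT; lia.
  exists (drop (k2 - k1) X); split.
    exact: (inc_drop HX hd).
  by rewrite size_drop sX; lia.
- have IH' := IH (ltac:(lia)).
  set s := t.+1 + (k2 - k1).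
  rewrite leqNgt; apply/negP => hlt.
  have hsX : (s < size X)%N by rewrite sX /s; lia.
  have hs1X : (s.-1 < size X)%N by rewrite sX /s; lia.
  have hY1 : (t.+1 < size Y)%N by rewrite sY.
  have hYt : (nth 0%N Y t < nth 0%N Y t.+1)%N := inc_pos_lt HY (ltnSn t) hY1.
  have hprev : (nth 0%N X s.-1 < nth 0%N Y t.+1)%N.
    by rewrite /s addSn /=; apply: leq_ltn_trans IH' hYt.
  have /andP[hbY hYc] := inc_nth_lt HY hY1.
  have /andP[haX hXc] := inc_nth_lt HX hsX.
  have /andP[haX1 _] := inc_nth_lt HX hs1X.
  have hneq : nth 0%R A (nth 0%N Y t.+1) != nth 0%R A (nth 0%N X s).
    have h1 : (nth 0%N Y t.+1 < size A)%N by apply: leq_ltn_trans hYc cA.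
    have h2 : (nth 0%N X s < size A)%N by apply: leq_ltn_trans hXc cA.
    rewrite nth_uniq //.
    by apply/negP => /eqP E; rewrite E ltnn in hlt.
  case: (ltgtP (nth 0%R A (nth 0%N Y t.+1)) (nth 0%R A (nth 0%N X s))) => hv;
    last by rewrite hv eqxx in hneq.
  + (* contradiction with maximality of b *)
    set V := take t.+2 Y ++ drop s X.
    have HV : inc_sub A b c V.
      have E : V = take t.+1 Y ++ nth 0%N Y t.+1 :: nth 0%N X s :: drop s.+1 X.
        by rewrite /V (take_nth 0%N) // (drop_nth 0%N) // cat_rcons.
      rewrite E; apply: inc_cat => //.
        by rewrite -(take_nth 0%N) //; apply: inc_take.
      rewrite -(drop_nth 0%N) //; apply: (inc_weak (i := nth 0%N X s)).
        by apply: leq_trans hbY (ltnW hlt).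
      exact: inc_drop HX hsX.
    have szV : size V = k1.+1.
      rewrite /V size_cat size_take size_drop sY sX /s.
      by case: ltnP => ?; lia.
    have hV1 : nth 0%N V 1 = nth 0%N Y 1.
      rewrite /V nth_cat size_take sY.
      have -> : (1 < (if (t.+2 < k1)%N then t.+2 else k1))%N by case: (ltnP t.+2 k1) => ?; lia.
      by rewrite nth_take.
    have /andP[hbY0 _] := inc_nth_lt (n := 0) HY (ltac:(lia)).
    have hY01 : (nth 0%N Y 0 < nth 0%N Y 1)%N := inc_pos_lt HY (ltnSn 0) (ltac:(lia)).
    have /andP[_ hY1c] := inc_nth_lt (n := 1) HY (ltac:(lia)).
    apply: (Hmax (nth 0%N Y 1)).
      by rewrite hY1c andbT; lia.
    exists (drop 1 V); split.
      by rewrite -hV1; apply: (inc_drop HV); rewrite szV.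
    by rewrite size_drop szV subn1.
  + (* contradiction with lexicographic minimality of X *)
    set Z := take s X ++ drop t.+1 Y.
    have hXs1 : (nth 0%N X s.-1 < nth 0%N X s)%N.
      by apply: (inc_pos_lt HX) => //; rewrite /s; lia.
    have hvX : (nth 0%R A (nth 0%N X s.-1) < nth 0%R A (nth 0%N X s))%R.
      by apply: (inc_val_lt HX) => //; rewrite /s; lia.
    have HZ : inc_sub A a c Z.
      have E : Z = take s.-1 X ++ nth 0%N X s.-1 :: nth 0%N Y t.+1 :: drop t.+2 Y.
        have Es : s = s.-1.+1 by rewrite /s; lia.
        by rewrite /Z {1}Es (take_nth 0%N) // (drop_nth 0%N hY1) // cat_rcons.
      rewrite E; apply: inc_cat => //.
      * have Es : s = s.-1.+1 by rewrite /s; lia.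
        by rewrite -(take_nth 0%N) // -Es; apply: inc_take.
      * rewrite -(drop_nth 0%N) //; apply: (inc_weak (i := nth 0%N Y t.+1)).
          by apply: leq_trans haX1 (ltnW hprev).
        exact: inc_drop HY hY1.
      * exact: lt_trans hvX hv.
    have szZ : size Z = k2.
      rewrite /Z size_cat size_take size_drop sY sX /s.
      by case: ltnP => ?; lia.
    have htk : take s Z = take s X.
      have hsz : size (take s X) = s by rewrite size_take hsX.
      by rewrite /Z take_cat hsz ltnn subnn take0 cats0.
    have hZs : nth 0%N Z s = nth 0%N Y t.+1.
      have hsz : size (take s X) = s by rewrite size_take hsX.
      by rewrite /Z nth_cat hsz ltnn subnn nth_drop addn0.
    apply: (lex_contra (minX Z HZ szZ) hsX) => //; first by rewrite szZ -sX.
    by rewrite hZs.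
Qed.
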